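(* If $A\in\{0,1\}^{n\times m}$ is a binary matrix, then its Boolean (Schein/Barvinok) rank equals its subtropical (Schein/Barvinok) rank.
   Context: $\mathbb{R}_+=[0,\infty)$. The max-times product of $B\in\mathbb{R}_+^{n\times k}$, $C\in\mathbb{R}_+^{k\times m}$ is $(B\boxtimes C)_{ij}=\max_{s=1}^{k} B_{is}C_{sj}$; the subtropical rank of $A\in\mathbb{R}_+^{n\times m}$ is the least $k$ such that $A=B\boxtimes C$ for some $B\in\mathbb{R}_+^{n\times k}$, $C\in\mathbb{R}_+^{k\times m}$. The Boolean product of binary matrices $B\in\{0,1\}^{n\times k}$, $C\in\{0,1\}^{k\times m}$ is $(B\circ C)_{ij}=\bigvee_{l=1}^k B_{il}C_{lj}$; the Boolean rank of a binary matrix $A$ is the least $k$ such that $A=B\circ C$ for some binary $B\in\{0,1\}^{n\times k}$, $C\in\{0,1\}^{k\times m}$. *)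

(* Defs.v *)
From mathcomp Require Import all_boot all_order all_algebra.
Set Implicit Arguments. Unset Strict Implicit. Unset Printing Implicit Defensive.
Import Order.TTheory GRing.Theory Num.Theory.
Local Open Scope ring_scope.

(* Max-times product over R_+ (entries of B, C assumed nonnegative);
   the empty max (k = 0) is 0, the least element of R_+. *)
Definition maxtimes (R : realFieldType) n k m
  (B : 'M[R]_(n, k)) (C : 'M[R]_(k, m)) : 'M[R]_(n, m) :=
  \matrix_(i, j) \big[Num.max/0]_(s < k) (B i s * C s j).

Definition nonneg_mx (R : realFieldType) n m (A : 'M[R]_(n, m)) : Prop :=
  forall i j, 0 <= A i j.

Definition subtrop_fact (R : realFieldType) n m (A : 'M[R]_(n, m)) (k : nat) : Prop :=
  exists (B : 'M[R]_(n, k)) (C : 'M[R]_(k, m)),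
    nonneg_mx B /\ nonneg_mx C /\ A = maxtimes B C.

Definition boolprod n k m (B : 'M[bool]_(n, k)) (C : 'M[bool]_(k, m)) : 'M[bool]_(n, m) :=
  \matrix_(i, j) [exists l : 'I_k, B i l && C l j].

Definition bool_fact n m (A : 'M[bool]_(n, m)) (k : nat) : Prop :=
  exists (B : 'M[bool]_(n, k)) (C : 'M[bool]_(k, m)), A = boolprod B C.

Definition real_of_bool (R : realFieldType) n m (A : 'M[bool]_(n, m)) : 'M[R]_(n, m) :=
  \matrix_(i, j) (if A i j then 1 else 0).

(* Ranks as least k admitting a factorization; stated via minimality
   to avoid choosing a witness. *)
Definition is_bool_rank n m (A : 'M[bool]_(n, m)) (r : nat) : Prop :=
  bool_fact A r /\ forall k, bool_fact A k -> (r <= k)%N.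

Definition is_subtrop_rank (R : realFieldType) n m (A : 'M[R]_(n, m)) (r : nat) : Prop :=
  subtrop_fact A r /\ forall k, subtrop_fact A k -> (r <= k)%N.

(* Main.v *)
Require Import Defs.
From mathcomp Require Import all_boot all_order all_algebra.
Set Implicit Arguments. Unset Strict Implicit. Unset Printing Implicit Defensive.
Import Order.TTheory GRing.Theory Num.Theory.
Local Open Scope ring_scope.

Section Aux.
Variables (R : realFieldType) (I : eqType) (F : I -> R).

Lemma bm_ge (r : seq I) x : x \in r -> F x <= \big[Num.max/0]_(i <- r) F i.
Proof.
elim: r => [//|y r IH]; rewrite in_cons big_cons le_max => /orP[/eqP->|/IH->].
  by rewrite lexx.
by rewrite orbT.
Qed.

Lemma bm_le (r : seq I) c : 0 <= c -> (forall i, F i <= c) ->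
  \big[Num.max/0]_(i <- r) F i <= c.
Proof.
move=> c0 H; elim: r => [|y r IH]; first by rewrite big_nil.
by rewrite big_cons ge_max H IH.
Qed.

Lemma bm_ex (r : seq I) : 0 < \big[Num.max/0]_(i <- r) F i ->
  exists2 x, x \in r & \big[Num.max/0]_(i <- r) F i = F x.
Proof.
elim: r => [|y r IH]; first by rewrite big_nil ltxx.
rewrite big_cons /Order.max; case: ifP => H.
  move=> /IH [x xr ->]; exists x => //.
  by rewrite in_cons xr orbT.
move=> _; exists y => //; by rewrite in_cons eqxx.
Qed.
Lemma bm_ge0 (r : seq I) : (forall i, 0 <= F i) -> 0 <= \big[Num.max/0]_(i <- r) F i.
Proof.
move=> H; elim: r => [|y r IH]; first by rewrite big_nil.
by rewrite big_cons le_max IH orbT.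
Qed.
End Aux.

Lemma fact_equiv (R : realFieldType) n m (A : 'M[bool]_(n, m)) k :
  bool_fact A k <-> subtrop_fact (real_of_bool R A) k.
Proof.
split.
  move=> [B [C ->]].
  exists (real_of_bool R B), (real_of_bool R C); split; last split.
  - by move=> i j; rewrite mxE; case: (B i j).
  - by move=> i j; rewrite mxE; case: (C i j).
  apply/matrixP => i j; rewrite !mxE.
  case: existsP => [[l /andP[Bl Cl]]|Hn].
    apply/eqP; rewrite eq_le; apply/andP; split.
      have := bm_ge (fun s => real_of_bool R B i s * real_of_bool R C s j)
                (mem_index_enum l).
      by rewrite !mxE Bl Cl mulr1.
    apply: (@bm_le R (ordinal k) (fun s => real_of_bool R B i s * real_of_bool R C s j) (index_enum _) 1) => // s; rewrite !mxE.
    by case: (B i s); case: (C s j); rewrite ?mulr0 ?mul0r ?mulr1.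
  apply/eqP; rewrite eq_le; apply/andP; split.
    apply: (@bm_ge0 R (ordinal k) (fun s => real_of_bool R B i s * real_of_bool R C s j) (index_enum _)) => s; rewrite !mxE.
    by case: (B i s) (C s j) => [] []; rewrite ?mulr0 ?mul0r ?mulr1.
  apply: (@bm_le R (ordinal k) (fun s => real_of_bool R B i s * real_of_bool R C s j) (index_enum _) 0) => // s; rewrite !mxE.
  case E1: (B i s); case E2: (C s j); rewrite ?mulr0 ?mul0r ?mulr1 //.
  by exfalso; apply: Hn; exists s; rewrite E1 E2.
move=> [B [C [B0 [C0 EA]]]].
exists (\matrix_(i, s) (0 < B i s)), (\matrix_(s, j) (0 < C s j)).
apply/matrixP => i j; rewrite !mxE.
have := congr1 (fun M : 'M[R]_(n, m) => M i j) EA; rewrite !mxE => E.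
apply/idP/existsP.
  move=> Aij; move: E; rewrite Aij => E.
  have : 0 < \big[Num.max/0]_(s < k) (B i s * C s j) by rewrite -E ltr01.
  move/bm_ex => [s _ Es]; exists s; rewrite !mxE.
  have P : 0 < B i s * C s j by rewrite -Es -E ltr01.
  rewrite !lt0r B0 C0 !andbT; apply/andP; split; apply/negP => /eqP Z;
    by move: P; rewrite Z ?mulr0 ?mul0r ltxx.
move=> [s /andP[]]; rewrite !mxE => Bp Cp.
have := bm_ge (fun s => B i s * C s j) (mem_index_enum s).
rewrite -E => H; have P := lt_le_trans (mulr_gt0 Bp Cp) H.
by move: P; case: (A i j); rewrite ?ltxx.
Qed.

Theorem lemma1 (R : realFieldType) (n m : nat) (A : 'M[bool]_(n, m)) (r : nat) :
  is_bool_rank A r <-> is_subtrop_rank (real_of_bool R A) r.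
Proof.
rewrite /is_bool_rank /is_subtrop_rank; split=> [[H1 H2]|[H1 H2]]; split.
- by apply/(@fact_equiv R _ _ A r).
- by move=> k /(@fact_equiv R _ _ A _)/H2.
- by apply/(@fact_equiv R _ _ A _).
- by move=> k /(@fact_equiv R _ _ A _)/H2.
Qed.
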